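(* Assume the local Lipschitz condition (2.2) and let $h$ be as in (2.3). Let $\Delta\in(0,\Delta^*]$ be small enough that $|f(0)|\le h(\Delta)$, $|g(0)|\le h(\Delta)$ and $L_{h(\Delta)}\ge 1$. Then the modified truncated functions $f_\Delta$ and $g_\Delta$ are globally Lipschitz with constant $4L_{h(\Delta)}$: $$|f_\Delta(x)-f_\Delta(\bar x)|\vee|g_\Delta(x)-g_\Delta(\bar x)|\le 4L_{h(\Delta)}|x-\bar x|\qquad\text{for all }x,\bar x\in\mathbb{R}^d.$$
   Context: $f:\mathbb{R}^d\to\mathbb{R}^d$ and $g:\mathbb{R}^d\to\mathbb{R}^{d\times m}$ are measurable. $|\cdot|$ denotes the Euclidean norm of vectors and the trace norm $|A|=\sqrt{\mathrm{trace}(A^TA)}$ of matrices. Condition (2.2) (local Lipschitz): for every $R>0$ there is $L_R>0$ such that $|f(x)-f(\bar x)|\vee|g(x)-g(\bar x)|\le L_R|x-\bar x|$ whenever $|x|\vee|\bar x|\le R$; $L_R$ is nondecreasing in $R$ and $L_R\uparrow\infty$ as $R\to\infty$. Condition (2.3): $\Delta^*>0$ and $h:(0,\Delta^*]\to(0,\infty)$ is strictly positive and decreasing with $\lim_{\Delta\to0}h(\Delta)=\infty$ and $\lim_{\Delta\to0}L_{h(\Delta)}^4\Delta=0$. Modified truncated functions: for $\Delta\in(0,\Delta^*]$, $f_\Delta(x)=f(x)$ if $|x|\le h(\Delta)$ and $f_\Delta(x)=\frac{|x|}{h(\Delta)}\,f\!\left(h(\Delta)\frac{x}{|x|}\right)$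 if $|x|>h(\Delta)$; $g_\Delta$ is defined in the same way from $g$. *)

(* Defs.v *)
From mathcomp Require Import ssreflect ssrfun ssrbool eqtype ssrnat fintype bigop.
From Stdlib Require Import Reals.
Open Scope R_scope.

Definition Vec (d : nat) := 'I_d -> R.
Definition Mat (d m : nat) := 'I_d -> 'I_m -> R.

Definition vzero (d : nat) : Vec d := fun _ => 0.
Definition vsub {d} (x y : Vec d) : Vec d := fun i => x i - y i.
Definition vscale {d} (c : R) (x : Vec d) : Vec d := fun i => c * x i.
Definition msub {d m} (A B : Mat d m) : Mat d m := fun i j => A i j - B i j.
Definition mscale {d m} (c : R) (A : Mat d m) : Mat d m := fun i j => c * A i j.

Definition vnorm {d} (x : Vec d) : R :=
  sqrt (\big[Rplus/0]_(i < d) (x i ^ 2)).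
(* trace norm |A| = sqrt(trace(A^T A)) = sqrt(sum_{i,j} A_ij^2) *)
Definition mnorm {d m} (A : Mat d m) : R :=
  sqrt (\big[Rplus/0]_(i < d) \big[Rplus/0]_(j < m) (A i j ^ 2)).

Definition f_trunc {d} (h : R -> R) (Delta : R) (f : Vec d -> Vec d) (x : Vec d) : Vec d :=
  if Rle_dec (vnorm x) (h Delta) then f x
  else vscale (vnorm x / h Delta) (f (vscale (h Delta / vnorm x) x)).

Definition g_trunc {d m} (h : R -> R) (Delta : R) (g : Vec d -> Mat d m) (x : Vec d) : Mat d m :=
  if Rle_dec (vnorm x) (h Delta) then g x
  else mscale (vnorm x / h Delta) (g (vscale (h Delta / vnorm x) x)).

Definition local_lipschitz {d m} (f : Vec d -> Vec d) (g : Vec d -> Mat d m)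
    (L : R -> R) : Prop :=
  (forall Rr, 0 < Rr -> 0 < L Rr) /\
  (forall Rr x xb, 0 < Rr -> vnorm x <= Rr -> vnorm xb <= Rr ->
      Rmax (vnorm (vsub (f x) (f xb))) (mnorm (msub (g x) (g xb)))
        <= L Rr * vnorm (vsub x xb)) /\
  (forall R1 R2, 0 < R1 -> R1 <= R2 -> L R1 <= L R2) /\
  (forall M, exists R0, 0 < R0 /\ forall Rr, R0 <= Rr -> M <= L Rr).

Definition cond_h (L : R -> R) (Dstar : R) (h : R -> R) : Prop :=
  0 < Dstar /\
  (forall D, 0 < D <= Dstar -> 0 < h D) /\
  (forall D1 D2, 0 < D1 -> D1 <= D2 -> D2 <= Dstar -> h D2 <= h D1) /\
  (forall M, exists eta, 0 < eta /\
      forall D, 0 < D <= Dstar -> D < eta -> M <= h D) /\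
  (forall eps, 0 < eps -> exists eta, 0 < eta /\
      forall D, 0 < D <= Dstar -> D < eta -> Rabs (L (h D) ^ 4 * D) < eps).

(* Main.v *)
Require Import Defs.
From mathcomp Require Import ssreflect ssrfun ssrbool eqtype ssrnat fintype bigop.
From Stdlib Require Import Reals Lra Psatz FunctionalExtensionality.
Open Scope R_scope.
From HB Require Import structures.
HB.instance Definition _ := Monoid.isComLaw.Build R 0 Rplus (fun a b c => esym (Rplus_assoc a b c)) Rplus_comm Rplus_0_l.

Definition S {n} (F : 'I_n -> R) := \big[Rplus/0]_(i < n) F i.

Lemma recr n (F : 'I_n.+1 -> R) : S F = S (fun i => F (widen_ord (leqnSn n) i)) + F ord_max.
Proof. exact: big_ord_recr. Qed.
Lemma rec0 (F : 'I_0 -> R) : S F = 0.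
Proof. exact: big_ord0. Qed.

Lemma sum_ext n (F G : 'I_n -> R) : (forall i, F i = G i) -> S F = S G.
Proof. move=> H; apply: eq_bigr => i _; exact: H. Qed.

Lemma sum_add n (F G : 'I_n -> R) : S (fun i => F i + G i) = S F + S G.
Proof.
elim: n F G => [|n IH] F G; first by rewrite !rec0; lra.
rewrite !recr /= IH; lra.
Qed.

Lemma sum_scal n c (F : 'I_n -> R) : S (fun i => c * F i) = c * S F.
Proof.
elim: n F => [|n IH] F; first by rewrite !rec0; lra.
rewrite !recr /= IH; lra.
Qed.

Lemma sum_le n (F G : 'I_n -> R) : (forall i, F i <= G i) -> S F <= S G.
Proof.
elim: n F G => [|n IH] F G H; first by rewrite !rec0; lra.
rewrite !recr /=. apply: Rplus_le_compat; [apply: IH => i|]; apply: H.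
Qed.

Lemma sum_ge0 n (F : 'I_n -> R) : (forall i, 0 <= F i) -> 0 <= S F.
Proof.
elim: n F => [|n IH] F H; first by rewrite !rec0; lra.
rewrite !recr /=. have := H ord_max. have := IH (fun i => F (widen_ord (leqnSn n) i)) (fun i => H _). lra.
Qed.

Lemma sqrt_le_sq X Y : 0 <= Y -> X <= Y * Y -> sqrt X <= Y.
Proof.
move=> HY HX. rewrite -(sqrt_square Y) //. exact: sqrt_le_1_alt.
Qed.

Lemma mink2 Tuv Tu Tv a b : 0 <= Tuv -> 0 <= Tu -> 0 <= Tv ->
  sqrt Tuv <= sqrt Tu + sqrt Tv ->
  sqrt (Tuv + (a + b) ^ 2) <= sqrt (Tu + a ^ 2) + sqrt (Tv + b ^ 2).
Proof.
move=> H1 H2 H3 H.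
have Hp := sqrt_sqrt _ H2. have Hq := sqrt_sqrt _ H3. have Hr := sqrt_sqrt _ H1.
have p0 := sqrt_pos Tu. have q0 := sqrt_pos Tv. have r0 := sqrt_pos Tuv.
set p := sqrt Tu in Hp p0 H. set q := sqrt Tv in Hq q0 H. set r := sqrt Tuv in Hr r0 H.
have HA : 0 <= Tu + a^2 by nra. have HB : 0 <= Tv + b^2 by nra.
have Hs1 := sqrt_sqrt _ HA. have Hs2 := sqrt_sqrt _ HB.
have s10 := sqrt_pos (Tu + a^2). have s20 := sqrt_pos (Tv + b^2).
set s1 := sqrt (Tu + a^2) in Hs1 s10 *. set s2 := sqrt (Tv + b^2) in Hs2 s20 *.
have Hss : p * q + a * b <= s1 * s2.
  have Hsq : (p*q + a*b)^2 <= (s1*s2)^2.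
    have -> : (s1*s2)^2 = (s1*s1)*(s2*s2) by ring.
    rewrite Hs1 Hs2 -Hp -Hq. have := pow2_ge_0 (p*b - a*q). nra.
  have := Rmult_le_pos _ _ s10 s20. case: (Rle_lt_dec (p*q+a*b) (s1*s2)) => // Hc. nra.
apply: sqrt_le_sq; first lra.
have : Tuv <= (p+q)*(p+q) by nra.
nra.
Qed.

Lemma sq_tri n (u v : 'I_n -> R) :
  sqrt (S (fun i => (u i + v i) ^ 2)) <= sqrt (S (fun i => u i ^ 2)) + sqrt (S (fun i => v i ^ 2)).
Proof.
elim: n u v => [|n IH] u v; first by rewrite !rec0 sqrt_0; lra.
rewrite !recr. apply: mink2; try (apply: sum_ge0 => i; apply: pow2_ge_0).
exact: (IH (fun i => u (widen_ord (leqnSn n) i)) (fun i => v (widen_ord (leqnSn n) i))).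
Qed.

Lemma vnormE d (x : Vec d) : vnorm x = sqrt (S (fun i => x i ^ 2)).
Proof. by []. Qed.

Lemma vnorm_ext d (u v : Vec d) : (forall i, u i = v i) -> vnorm u = vnorm v.
Proof. move=> H; rewrite !vnormE; f_equal; apply: sum_ext => i; by rewrite H. Qed.

Lemma vnorm_ge0 d (x : Vec d) : 0 <= vnorm x.
Proof. exact: sqrt_pos. Qed.

Lemma vnorm_add d (u v : Vec d) : vnorm (fun i => u i + v i) <= vnorm u + vnorm v.
Proof. exact: sq_tri. Qed.

Lemma vnorm_scale d c (x : Vec d) : vnorm (vscale c x) = Rabs c * vnorm x.
Proof.
rewrite !vnormE.
have -> : S (fun i => vscale c x i ^ 2) = (c * c) * S (fun i => x i ^ 2).
  rewrite -sum_scal; apply: sum_ext => i; rewrite /vscale; ring.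
rewrite sqrt_mult_alt; last nra.
by rewrite -sqrt_Rsqr_abs.
Qed.

Lemma vnorm_mono d (u v : Vec d) : (forall i, 0 <= u i <= v i) -> vnorm u <= vnorm v.
Proof.
move=> H; rewrite !vnormE; apply: sqrt_le_1_alt; apply: sum_le => i.
have := H i; nra.
Qed.

Lemma vnorm_sub_sym d (x y : Vec d) : vnorm (vsub x y) = vnorm (vsub y x).
Proof.
rewrite (@vnorm_ext _ _ (vscale (-1) (vsub y x))); last by move=> i; rewrite /vscale /vsub; ring.
rewrite vnorm_scale Rabs_Ropp Rabs_R1; ring.
Qed.

Lemma vnorm_subtri d (x y z : Vec d) : vnorm (vsub x z) <= vnorm (vsub x y) + vnorm (vsub y z).
Proof.
rewrite (@vnorm_ext _ _ (fun i => vsub x y i + vsub y z i)); last by move=> i; rewrite /vsub; ring.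
exact: vnorm_add.
Qed.

Lemma vnorm_lin d (x y : Vec d) c :
  vnorm (vsub x (vscale c y)) <= vnorm (vsub x y) + Rabs (1 - c) * vnorm y.
Proof.
rewrite (@vnorm_ext _ _ (fun i => vsub x y i + vscale (1 - c) y i)); last by move=> i; rewrite /vsub /vscale; ring.
rewrite -vnorm_scale; exact: vnorm_add.
Qed.

Lemma vnorm_rev d (x y : Vec d) : vnorm y - vnorm x <= vnorm (vsub x y).
Proof.
rewrite (@vnorm_ext _ y (fun i => vsub y x i + x i)); last by move=> i; rewrite /vsub; ring.
have := vnorm_add _ (vsub y x) x. rewrite vnorm_sub_sym. lra.
Qed.

Lemma vnorm_zero d (x : Vec d) : vnorm (vsub x (vzero d)) = vnorm x.
Proof. apply: vnorm_ext => i; rewrite /vsub /vzero; ring. Qed.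

Lemma vnorm_sc d c e (u v : Vec d) :
  vnorm (vsub (vscale c u) (vscale e v)) <= Rabs c * vnorm (vsub u v) + Rabs (c - e) * vnorm v.
Proof.
rewrite (@vnorm_ext _ _ (fun i => vscale c (vsub u v) i + vscale (c - e) v i)); last by move=> i; rewrite /vsub /vscale; ring.
rewrite -!vnorm_scale; exact: vnorm_add.
Qed.

Lemma vnorm_bd d (u v : Vec d) : vnorm u <= vnorm v + vnorm (vsub u v).
Proof.
rewrite {1}(@vnorm_ext _ u (fun i => v i + vsub u v i)); last by move=> i; rewrite /vsub; ring.
exact: vnorm_add.
Qed.

Lemma vscale1 d (u : Vec d) : vscale 1 u = u.
Proof. apply: functional_extensionality => i; rewrite /vscale; ring. Qed.

Lemma mnormE d m (A : Mat d m) : mnorm A = vnorm (fun i => vnorm (A i)).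
Proof.
rewrite /mnorm vnormE; f_equal; apply: sum_ext => i.
rewrite vnormE. have H : 0 <= S (fun j => A i j ^ 2) by apply: sum_ge0 => j; apply: pow2_ge_0.
have E := sqrt_sqrt _ H. rewrite /S in E *. rewrite -{1}E. ring.
Qed.

Lemma mnorm_ext d m (A B : Mat d m) : (forall i j, A i j = B i j) -> mnorm A = mnorm B.
Proof. move=> H; rewrite !mnormE; apply: vnorm_ext => i; apply: vnorm_ext => j; exact: H. Qed.

Lemma mnorm_add d m (A B : Mat d m) : mnorm (fun i j => A i j + B i j) <= mnorm A + mnorm B.
Proof.
rewrite !mnormE.
apply: Rle_trans (vnorm_add _ (fun i => vnorm (A i)) (fun i => vnorm (B i))).
apply: vnorm_mono => i; split; first exact: vnorm_ge0.
exact: (vnorm_add _ (A i) (B i)).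
Qed.

Lemma mnorm_scale d m c (A : Mat d m) : mnorm (mscale c A) = Rabs c * mnorm A.
Proof.
rewrite !mnormE -(Rabs_Rabsolu c) -vnorm_scale; apply: vnorm_ext => i.
exact: (vnorm_scale _ c (A i)).
Qed.

Lemma mnorm_sc d m c e (u v : Mat d m) :
  mnorm (msub (mscale c u) (mscale e v)) <= Rabs c * mnorm (msub u v) + Rabs (c - e) * mnorm v.
Proof.
rewrite (@mnorm_ext _ _ _ (fun i j => mscale c (msub u v) i j + mscale (c - e) v i j)); last by move=> i j; rewrite /msub /mscale; ring.
rewrite -!mnorm_scale; exact: mnorm_add.
Qed.

Lemma mnorm_bd d m (u v : Mat d m) : mnorm u <= mnorm v + mnorm (msub u v).
Proof.
rewrite {1}(@mnorm_ext _ _ u (fun i j => v i j + msub u v i j)); last by move=> i j; rewrite /msub; ring.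
exact: mnorm_add.
Qed.

Lemma mnorm_sub_sym d m (x y : Mat d m) : mnorm (msub x y) = mnorm (msub y x).
Proof.
rewrite (@mnorm_ext _ _ _ (mscale (-1) (msub y x))); last by move=> i j; rewrite /mscale /msub; ring.
rewrite mnorm_scale Rabs_Ropp Rabs_R1; ring.
Qed.

Lemma mnorm_ge0 d m (A : Mat d m) : 0 <= mnorm A.
Proof. exact: sqrt_pos. Qed.

Lemma mscale1 d m (u : Mat d m) : mscale 1 u = u.
Proof. apply: functional_extensionality => i; apply: functional_extensionality => j; rewrite /mscale; ring. Qed.
Definition phi_ {d} (H : R) (z : Vec d) := if Rle_dec (vnorm z) H then 1 else vnorm z / H.

Lemma core d (Y : Type) (sub : Y -> Y -> Y) (scale : R -> Y -> Y) (N : Y -> R)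
  (F : Vec d -> Y) (H L : R) :
  0 < H -> 1 <= L ->
  (forall u, 0 <= N u) ->
  (forall u v, N (sub u v) = N (sub v u)) ->
  (forall u v, N u <= N v + N (sub u v)) ->
  (forall c e u v, N (sub (scale c u) (scale e v)) <= Rabs c * N (sub u v) + Rabs (c - e) * N v) ->
  (forall u, scale 1 u = u) ->
  (forall x y, vnorm x <= H -> vnorm y <= H -> N (sub (F x) (F y)) <= L * vnorm (vsub x y)) ->
  N (F (vzero d)) <= H ->
  forall x y,
    N (sub (if Rle_dec (vnorm x) H then F x else scale (vnorm x / H) (F (vscale (H / vnorm x) x)))
           (if Rle_dec (vnorm y) H then F y else scale (vnorm y / H) (F (vscale (H / vnorm y) y))))
    <= 4 * L * vnorm (vsub x y).
Proof.
move=> H0 L1 N0 Nsym Nbd Nsc N1 FL F0.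
have phicase : forall z : Vec d, (vnorm z <= H /\ phi_ H z = 1) \/ (H < vnorm z /\ phi_ H z * H = vnorm z).
  move=> z; rewrite /phi_; destruct (Rle_dec (vnorm z) H) as [h|h]; [left; split=> // | right].
  simpl; have h' := Rnot_le_lt _ _ h; split=> //; field; lra.
have phi1 : forall z : Vec d, 1 <= phi_ H z.
  move=> z; case: (phicase z) => [[h ->]|[h E]]; first lra.
  nra.
have phiH : forall z : Vec d, vnorm z <= phi_ H z * H.
  move=> z; case: (phicase z) => [[h ->]|[h E]]; lra.
have HFt : forall z : Vec d, (if Rle_dec (vnorm z) H then F z else scale (vnorm z / H) (F (vscale (H / vnorm z) z)))
    = scale (phi_ H z) (F (vscale (/ phi_ H z) z)).
  move=> z; rewrite /phi_; destruct (Rle_dec (vnorm z) H) as [h|h].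
  - simpl; rewrite N1; f_equal; apply: functional_extensionality => i; rewrite /vscale Rinv_1; ring.
  - simpl; have h' := Rnot_le_lt _ _ h. f_equal; f_equal; apply: functional_extensionality => i; rewrite /vscale; f_equal.
    field; split; lra.
have HP : forall z : Vec d, vnorm (vscale (/ phi_ H z) z) <= H.
  move=> z; have p1 := phi1 z; have pH := phiH z.
  rewrite vnorm_scale Rabs_pos_eq; last by apply: Rlt_le; apply: Rinv_0_lt_compat; lra.
  apply: (Rmult_le_reg_l (phi_ H z)); first lra.
  rewrite -Rmult_assoc Rinv_r; lra.
have main : forall x y, vnorm x <= vnorm y ->
    N (sub (scale (phi_ H x) (F (vscale (/ phi_ H x) x))) (scale (phi_ H y) (F (vscale (/ phi_ H y) y))))
    <= 4 * L * vnorm (vsub x y).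
  move=> x y hxy.
  have px1 := phi1 x; have py1 := phi1 y.
  have hr := vnorm_rev _ x y. have hr2 := vnorm_rev _ y x. rewrite vnorm_sub_sym in hr2.
  have D0 := vnorm_ge0 _ (vsub x y).
  have pxH := phiH x.
  apply: Rle_trans (Nsc _ _ _ _) _.
  rewrite (Rabs_pos_eq (phi_ H x)); last lra.
  have T1 : phi_ H x * N (sub (F (vscale (/ phi_ H x) x)) (F (vscale (/ phi_ H y) y))) <= 2 * L * vnorm (vsub x y).
    have hF := FL _ _ (HP x) (HP y).
    have K : phi_ H x * vnorm (vsub (vscale (/ phi_ H x) x) (vscale (/ phi_ H y) y)) <= 2 * vnorm (vsub x y).
      have E : phi_ H x * vnorm (vsub (vscale (/ phi_ H x) x) (vscale (/ phi_ H y) y))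
               = vnorm (vsub x (vscale (phi_ H x / phi_ H y) y)).
        rewrite -{1}(Rabs_pos_eq (phi_ H x)); last lra.
        rewrite -vnorm_scale; apply: vnorm_ext => i; rewrite /vscale /vsub; field; split; lra.
      rewrite E; apply: Rle_trans (vnorm_lin _ x y (phi_ H x / phi_ H y)) _.
      suff : Rabs (1 - phi_ H x / phi_ H y) * vnorm y <= vnorm y - vnorm x by lra.
      case: (phicase y) => [[hy ey]|[hy ey]].
      + case: (phicase x) => [[hx ex]|[hx ex]]; last lra.
        rewrite ex ey. have -> : 1 - 1 / 1 = 0 by field. rewrite Rabs_R0; lra.
      + have pxy : phi_ H x * H <= phi_ H y * H by case: (phicase x) => [[hx ex]|[hx ex]]; [rewrite ex; lra | lra].
        have pxy' : phi_ H x <= phi_ H y by nra.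
        rewrite Rabs_pos_eq; last first.
          have : phi_ H x / phi_ H y <= 1 by apply: (Rmult_le_reg_r (phi_ H y)); [lra | field_simplify; lra].
          lra.
        have -> : (1 - phi_ H x / phi_ H y) * vnorm y = vnorm y - phi_ H x * H.
          rewrite -ey; field; lra.
        lra.
    have := Rmult_le_compat_l (phi_ H x) _ _ ltac:(lra) hF.
    have := Rmult_le_compat_l L _ _ ltac:(lra) K.
    nra.
  have T2 : Rabs (phi_ H x - phi_ H y) * N (F (vscale (/ phi_ H y) y)) <= 2 * L * vnorm (vsub x y).
    have hphi : Rabs (phi_ H x - phi_ H y) * H <= vnorm (vsub x y).
      have hh : Rabs (phi_ H x * H - phi_ H y * H) <= vnorm (vsub x y).
        apply: Rabs_le.
        case: (phicase x) => [[hx ex]|[hx ex]]; case: (phicase y) => [[hy ey]|[hy ey]];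
          rewrite ?ex ?ey; lra.
      rewrite -Rmult_minus_distr_r Rabs_mult (Rabs_pos_eq H) in hh; last lra.
      exact: hh.
    have Hz0 : vnorm (vzero d) <= H.
      rewrite (@vnorm_ext _ _ (vscale 0 (vzero d))); last by move=> i; rewrite /vscale /vzero; ring.
      rewrite vnorm_scale Rabs_R0; have := vnorm_ge0 _ (vzero d); nra.
    have hN : N (F (vscale (/ phi_ H y) y)) <= H + L * H.
      have := Nbd (F (vscale (/ phi_ H y) y)) (F (vzero d)).
      have := FL _ _ (HP y) Hz0.
      rewrite vnorm_zero. have := HP y. nra.
    have r0 := Rabs_pos (phi_ H x - phi_ H y).
    have := N0 (F (vscale (/ phi_ H y) y)).
    nra.
  lra.
move=> x y; rewrite !HFt.
case: (Rle_lt_dec (vnorm x) (vnorm y)) => h; first exact: main.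
rewrite Nsym vnorm_sub_sym; apply: main; lra.
Qed.

Theorem lemma2p2 (d m : nat) (f : Vec d -> Vec d) (g : Vec d -> Mat d m)
    (L : R -> R) (Dstar : R) (h : R -> R)
    (HL : local_lipschitz f g L) (Hh : cond_h L Dstar h)
    (Delta : R) (HD : 0 < Delta <= Dstar)
    (Hf0 : vnorm (f (vzero d)) <= h Delta)
    (Hg0 : mnorm (g (vzero d)) <= h Delta)
    (HL1 : 1 <= L (h Delta)) :
  forall x xb : Vec d,
    Rmax (vnorm (vsub (f_trunc h Delta f x) (f_trunc h Delta f xb)))
         (mnorm (msub (g_trunc h Delta g x) (g_trunc h Delta g xb)))
      <= 4 * L (h Delta) * vnorm (vsub x xb).
Proof.
move: HL Hh => [Lpos [Llip _]] [_ [hpos _]].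
have Hp : 0 < h Delta by apply: hpos.
move=> x xb; apply: Rmax_lub.
- apply: (core d _ vsub vscale vnorm f (h Delta) (L (h Delta)) Hp HL1 (vnorm_ge0 d)
     (vnorm_sub_sym d) (vnorm_bd d) (vnorm_sc d) (vscale1 d) _ Hf0 x xb).
  move=> y z hy hz; have := Llip _ y z Hp hy hz; have := Rmax_l (vnorm (vsub (f y) (f z))) (mnorm (msub (g y) (g z))); lra.
- apply: (core d _ msub mscale mnorm g (h Delta) (L (h Delta)) Hp HL1 (mnorm_ge0 d m)
     (mnorm_sub_sym d m) (mnorm_bd d m) (mnorm_sc d m) (mscale1 d m) _ Hg0 x xb).
  move=> y z hy hz; have := Llip _ y z Hp hy hz; have := Rmax_r (vnorm (vsub (f y) (f z))) (mnorm (msub (g y) (g z))); lra.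
Qed.
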